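(* Let $P$ and $Q$ be finitely generated graded rank one projective right $A$-modules, given as graded submodules of $Q_{\mathrm{gr}}(A)$. Then every homomorphism $P\to Q$ in $\operatorname{gr}A$ is given by left multiplication by some element of $\Bbbk(z)$, and $\operatorname{Hom}_{\operatorname{gr}A}(P,Q)$ is a free left $\Bbbk[z]$-module of rank one.
   Context: $\Bbbk$ algebraically closed of characteristic $0$; $\sigma(z)=z+1$. For $\alpha\in\Bbbk$, $f=z(z+\alpha)$, $A=A(f)$ generated by $\Bbbk[z],x,y$ with $xz=(z+1)x$, $yz=(z-1)y$, $xy=f$, $yx=\sigma^{-1}(f)$, graded by $\deg x=1,\deg y=-1,\deg z=0$; $\operatorname{gr}A$: finitely generated graded right $A$-modules with degree-$0$ maps. $Q_{\mathrm{gr}}(A)=\Bbbk(z)[x,x^{-1};\sigma]$ is the graded quotient ring. A rank one graded projective module is a nonzero finitely generated graded projective right $A$-module isomorphic to a graded submodule of $Q_{\mathrm{gr}}(A)$. $\operatorname{Hom}_{\operatorname{gr}A}(P,Q)$ is a left $\Bbbk[z]$-module via left multiplication of $\Bbbk[z]\subseteq\Bbbk(z)$ on the multiplier. *)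

(* Defs.v *)
From HB Require Import structures.
From mathcomp Require Import all_boot all_order all_algebra.
Set Implicit Arguments. Unset Strict Implicit. Unset Printing Implicit Defensive.
Import Order.TTheory GRing.Theory Num.Theory.
Local Open Scope ring_scope.

Notation "x %:F" := (@FracField.tofrac _ x) : ring_scope.

Section GWA.
Variable F : fieldType.

Definition Kz := {fraction {poly F}}.

Definition shiftp (m : int) (p : {poly F}) : {poly F} := p \Po ('X + (m%:~R : F)%:P).

Definition shiftK (m : int) (u : Kz) : Kz :=
  let r := repr u in (shiftp m (\n_r))%:F / (shiftp m (\d_r))%:F.

(* Homogeneous elements of Q_gr(A) = k(z)[x,x^-1;sigma] are written  a x^n,
   encoded as the pair (n, a).  Product: (a x^m)(b x^n) = a sigma^m(b) x^(m+n). *)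

Definition fpol (alpha : F) : {poly F} := 'X * ('X + alpha%:P).

(* inA alpha n a  <->  a x^n lies in A = A(f), viewed inside Q_gr(A):
   A is the subalgebra generated by k[z], x = 1 x^1, y = x^-1 f = sigma^-1(f) x^-1;
   inA describes its degree-n homogeneous components (spanned by degree-n products
   of generators). *)
Inductive inA (alpha : F) : int -> Kz -> Prop :=
| inA_poly (p : {poly F}) : inA alpha 0 (p%:F)
| inA_x : inA alpha 1 1
| inA_y : inA alpha (-1) ((shiftp (-1) (fpol alpha))%:F)
| inA_add n a b : inA alpha n a -> inA alpha n b -> inA alpha n (a + b)
| inA_mul m n a b : inA alpha m a -> inA alpha n b ->
    inA alpha (m + n) (a * shiftK m b).

(* A graded right A-module presented by its homogeneous components:
   carrier group, component predicates gcomp n, and the action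
   gact n v m a  = (v of degree n) . (a x^m). *)
Record grmod := GrMod {
  gcar : zmodType;
  gcomp : int -> gcar -> Prop;
  gact : int -> gcar -> int -> Kz -> gcar }.
Arguments gcomp : clear implicits.
Arguments gact : clear implicits.

Definition is_grmod (alpha : F) (M : grmod) : Prop :=
  (forall n, gcomp M n 0) /\
  (forall n v w, gcomp M n v -> gcomp M n w -> gcomp M n (v + w)) /\
  (forall n v, gcomp M n v -> gcomp M n (- v)) /\
  (forall n v m a, gcomp M n v -> inA alpha m a -> gcomp M (n + m) (gact M n v m a)).

Definition grhom (alpha : F) (M N : grmod) (phi : int -> gcar M -> gcar N) : Prop :=
  (forall n v, gcomp M n v -> gcomp N n (phi n v)) /\
  (forall n v w, gcomp M n v -> gcomp M n w -> phi n (v + w) = phi n v + phi n w) /\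
  (forall n v m a, gcomp M n v -> inA alpha m a ->
      phi (n + m) (gact M n v m a) = gact N n (phi n v) m a).
Arguments grhom : clear implicits.

Definition fingen (alpha : F) (M : grmod) : Prop :=
  exists gens : seq (int * gcar M),
    (forall i, (i < size gens)%N -> gcomp M (nth (0, 0) gens i).1 (nth (0, 0) gens i).2) /\
    forall n v, gcomp M n v ->
      exists a : nat -> Kz,
        (forall i, (i < size gens)%N -> inA alpha (n - (nth (0, 0) gens i).1) (a i)) /\
        v = \sum_(i < size gens)
              gact M (nth (0, 0) gens i).1 (nth (0, 0) gens i).2
                    (n - (nth (0, 0) gens i).1) (a i).

(* graded submodule of Q_gr(A) with components P n ⊆ k(z) (P = ⊕ P_n x^n) *)
Definition subQ (P : int -> Kz -> Prop) : grmod :=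
  @GrMod Kz P (fun n p m a => p * shiftK n a).

(* the graded free module ⊕_i A(d_i), with A(d)_n = A_(n+d) *)
Definition freeA (alpha : F) (ds : seq int) : grmod :=
  @GrMod 'rV[Kz]_(size ds)
    (fun n v => forall i : 'I_(size ds), inA alpha (n + ds`_i) (v 0 i))
    (fun n v m a => \row_i (v 0 i * shiftK (n + ds`_i) a)).

Definition grprojective (alpha : F) (M : grmod) : Prop :=
  exists (ds : seq int) (iota : int -> gcar M -> gcar (freeA alpha ds))
         (pi : int -> gcar (freeA alpha ds) -> gcar M),
    grhom alpha M (freeA alpha ds) iota /\ grhom alpha (freeA alpha ds) M pi /\
    forall n v, gcomp M n v -> pi n (iota n v) = v.

Definition nonzero (M : grmod) : Prop := exists n v, gcomp M n v /\ v <> 0.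

Definition rank_one_sub (alpha : F) (P : int -> Kz -> Prop) : Prop :=
  is_grmod alpha (subQ P) /\ nonzero (subQ P) /\ fingen alpha (subQ P) /\
  grprojective alpha (subQ P).

End GWA.
Arguments grhom {F} alpha M N phi.
Arguments gcomp {F} g _ _.
Arguments gact {F} g _ _ _ _.

(* Main.v *)
Require Import Defs.
From HB Require Import structures.
From mathcomp Require Import all_boot all_order all_algebra.
Import Order.TTheory GRing.Theory Num.Theory.
Local Open Scope ring_scope.

Lemma frac_repr {R : idomainType} (u : {fraction R}) :
  u * (\d_(repr u))%:F = (\n_(repr u))%:F.
Proof.
rewrite -{1}[u]reprK.
set r := repr u.
unlock FracField.tofrac.
rewrite !piE.
apply/eqmodP => /=.
rewrite FracField.equivfE /FracField.mulf /=.
rewrite !numden_Ratio ?mulf_neq0 ?oner_neq0 //.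
by rewrite !mulr1 mulrC.
all: exact: denom_ratioP.
Qed.

Section S.
Variable k : fieldType.
Local Notation K := (Kz k).

Lemma shiftpM m (p q : {poly k}) : shiftp m (p * q) = shiftp m p * shiftp m q.
Proof. by rewrite /shiftp comp_polyM. Qed.
Lemma shiftpD m (p q : {poly k}) : shiftp m (p + q) = shiftp m p + shiftp m q.
Proof. by rewrite /shiftp comp_polyD. Qed.
Lemma shiftpC m (c : k) : shiftp m c%:P = c%:P.
Proof. by rewrite /shiftp comp_polyC. Qed.
Lemma shiftp0 m : shiftp m (0 : {poly k}) = 0.
Proof. by rewrite /shiftp comp_poly0. Qed.
Lemma shiftp1 m : shiftp m (1 : {poly k}) = 1.
Proof. by rewrite /shiftp -polyC1 comp_polyC. Qed.
Lemma shiftpA m n (p : {poly k}) : shiftp m (shiftp n p) = shiftp (n + m) p.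
Proof.
rewrite /shiftp -comp_polyA comp_polyD comp_polyX comp_polyC -addrA -polyCD.
by rewrite -intrD [n + m]addrC.
Qed.
Lemma shiftpz (p : {poly k}) : shiftp 0 p = p.
Proof. by rewrite /shiftp /= addr0 comp_polyXr. Qed.
Lemma shiftpK m (p : {poly k}) : shiftp (- m) (shiftp m p) = p.
Proof. by rewrite shiftpA subrr shiftpz. Qed.
Lemma shiftKp m (p : {poly k}) : shiftp m (shiftp (- m) p) = p.
Proof. by rewrite shiftpA addNr shiftpz. Qed.
Lemma shiftp_eq0 m (p : {poly k}) : (shiftp m p == 0) = (p == 0).
Proof.
apply/eqP/eqP => [h|->]; last exact: shiftp0.
by rewrite -(shiftpK m p) h shiftp0.
Qed.

Lemma shiftK_poly m (b : {poly k}) : shiftK m (b%:F) = (shiftp m b)%:F.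
Proof.
rewrite /shiftK.
have := frac_repr (b%:F : K); set r := repr _ => h.
have d0 : \d_r != 0 by exact: denom_ratioP.
rewrite -tofracM in h; move/eqP: h; rewrite tofrac_eq => /eqP <-.
rewrite shiftpM tofracM mulfK // tofrac_eq0 shiftp_eq0 //.
Qed.

Variable alpha : k.

Lemma inA_polyE n a : inA alpha n a -> exists p, a = p%:F.
Proof.
elim=> [p|||n' a' b _ [p ->] _ [q ->]|m n' a' b _ [p ->] _ [q ->]].
- by exists p.
- by exists 1; rewrite tofrac1.
- by eexists.
- by exists (p + q); rewrite tofracD.
- by exists (p * shiftp m q); rewrite shiftK_poly tofracM.
Qed.

Lemma inA_pos (j : nat) (p : {poly k}) : inA alpha j p%:F.
Proof.
elim: j p => [|j IH] p; first exact: inA_poly.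
have := inA_mul (IH p) (inA_x alpha).
rewrite -tofrac1 shiftK_poly shiftp1 tofrac1 mulr1.
by have -> : (j%:Z + 1) = j.+1%:Z by rewrite -addn1 PoszD.
Qed.

Lemma fpol_neq0 : fpol alpha != 0.
Proof. by rewrite /fpol mulf_neq0 ?polyX_eq0 // monic_neq0 // monicXaddC. Qed.

Lemma inA_neg (j : nat) : exists a, a != 0 /\ inA alpha (- j%:Z) a%:F.
Proof.
elim: j => [|j [a [a0 Ha]]]; first by exists 1; split; [exact: oner_neq0|exact: inA_poly].
have := inA_mul Ha (inA_y alpha).
rewrite shiftK_poly -tofracM => H.
exists (a * shiftp (- j%:Z) (shiftp (-1) (fpol alpha))); split.
  by rewrite mulf_neq0 // !shiftp_eq0 fpol_neq0.
suff -> : (- j.+1%:Z) = - j%:Z + -1 by [].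
by rewrite -opprD -[j.+1]addn1.
Qed.

Lemma inA_nz (j : int) : exists a, a != 0 /\ inA alpha j a%:F.
Proof.
case: j => n.
  by exists 1; split; [exact: oner_neq0|exact: inA_pos].
by rewrite NegzE; apply: inA_neg.
Qed.

Lemma polyM_closed (P : int -> K -> Prop) d x (h : {poly k}) :
  is_grmod alpha (subQ P) -> P d x -> P d (h%:F * x).
Proof.
case=> _ [_ [_ HA]] Hx.
have := HA d x 0 ((shiftp (-d) h)%:F) Hx (inA_poly _ _).
by rewrite /= addr0 shiftK_poly shiftKp mulrC.
Qed.

Lemma ratio (x y : K) : x != 0 -> exists a b : {poly k}, b != 0 /\ y * b%:F = x * a%:F.
Proof.
move=> x0.
have := frac_repr (y / x); set r := repr _ => h.
exists (\n_r), (\d_r); split; first exact: denom_ratioP.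
by rewrite -h mulrA mulrCA divff // mulr1.
Qed.

Lemma degs (m n : int) : exists d1 d2 : nat, m + d1%:Z = n + d2%:Z.
Proof.
have [h|h] := lerP m n.
  exists `|n - m|%N, 0%N; rewrite gez0_abs ?subr_ge0 // addr0.
  by rewrite subrKC.
exists 0%N, `|m - n|%N; rewrite gez0_abs ?subr_ge0 ?ltW // addr0.
by rewrite subrKC.
Qed.

Lemma hom_mul (P Q : int -> K -> Prop) phi n0 p0 :
  grhom alpha (subQ P) (subQ Q) phi -> P n0 p0 -> p0 != 0 ->
  forall m q, P m q -> phi m q = (phi n0 p0 / p0) * q.
Proof.
case=> _ [_ H3] Hp0 p00 m q Hq.
have [a [b [b0 hqb]]] := @ratio p0 q p00.
have [d1 [d2 Ed]] := degs m n0.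
have E1 := H3 m q d1 ((shiftp (-m) b)%:F) Hq (inA_pos d1 _).
have E2 := H3 n0 p0 d2 ((shiftp (-n0) a)%:F) Hp0 (inA_pos d2 _).
rewrite /= !shiftK_poly !shiftKp in E1 E2.
rewrite Ed hqb E2 in E1.
have b0' : b%:F != 0 :> K by rewrite tofrac_eq0.
apply: (mulIf b0'); rewrite -E1 -[RHS]mulrA hqb.
by rewrite [RHS]mulrA; congr (_ * _); rewrite (divfK p00).
Qed.

Definition Cdef (P Q : int -> K -> Prop) c := forall n p, P n p -> Q n (c * p).

Lemma grhom_mulC P Q c : Cdef P Q c -> grhom alpha (subQ P) (subQ Q) (fun _ p => c * p).
Proof.
move=> Hc; split; first exact: Hc.
split; first by move=> *; rewrite mulrDr.
by move=> * /=; rewrite mulrA.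
Qed.

Lemma C_polyM P Q c g : is_grmod alpha (subQ Q) -> Cdef P Q c -> Cdef P Q (g%:F * c).
Proof. by move=> HQ Hc n p Hp; rewrite -mulrA; apply: polyM_closed => //; apply: Hc. Qed.

Lemma C_add P Q c1 c2 : is_grmod alpha (subQ Q) -> Cdef P Q c1 -> Cdef P Q c2 ->
  Cdef P Q (c1 + c2).
Proof.
case=> _ [HD _] H1 H2 n p Hp; rewrite mulrDl; apply: HD; [exact: H1|exact: H2].
Qed.

Definition ispoly (x : K) := exists e : {poly k}, x = e%:F.

Lemma ispoly_sum N (f : 'I_N -> K) : (forall i, ispoly (f i)) -> ispoly (\sum_i f i).
Proof.
move=> Hf; apply: (big_ind ispoly).
- by exists 0; rewrite tofrac0.
- by move=> _ _ [e1 ->] [e2 ->]; exists (e1 + e2); rewrite tofracD.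
- by move=> i _; apply: Hf.
Qed.

Lemma ispoly_sumM N (f : 'I_N -> K) x :
  (forall i, ispoly (x * f i)) -> ispoly (x * \sum_i f i).
Proof. by move=> Hf; rewrite mulr_sumr; apply: ispoly_sum. Qed.

Lemma den_common N (f : nat -> K) :
  exists D : {poly k}, D != 0 /\ forall i, (i < N)%N -> exists e, f i * D%:F = e%:F.
Proof.
elim: N => [|N [D [D0 HD]]]; first by exists 1; split; [exact: oner_neq0|].
have := frac_repr (f N); set r := repr _ => h.
have d0 : \d_r != 0 by exact: denom_ratioP.
exists (D * \d_r); split; first by rewrite mulf_neq0.
move=> i; rewrite ltnS leq_eqVlt => /orP [/eqP ->|lt].
  by exists (\n_r * D); rewrite !tofracM mulrCA h mulrC.
have [e he] := HD i lt; exists (e * \d_r).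
by rewrite !tofracM mulrA he.
Qed.

Lemma C_bound (P Q : int -> K -> Prop) (n0 : int) (p0 : K) :
  fingen alpha (subQ Q) -> P n0 p0 -> p0 != 0 ->
  exists H, H != 0 /\ forall c, Cdef P Q c -> exists g : {poly k}, c = g%:F * H.
Proof.
case=> gens [_ Hdec] Hp0 p00.
have [D [D0 HD]] := den_common (size gens) (fun i => (nth (0, 0) gens i).2).
have D0' : D%:F != 0 :> K by rewrite tofrac_eq0.
have Hn : (D%:F * p0)^-1 != 0 :> K.
  rewrite invr_eq0; apply: mulf_neq0; [exact: D0'|exact: p00].
exists (D%:F * p0)^-1; split; first exact: Hn.
move=> c Hc.
have [a [Ha E]] := Hdec _ _ (Hc _ _ Hp0).
suff [G HG] : ispoly (D%:F * \sum_(i < size gens)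
   gact (subQ Q) (nth (0, 0) gens i).1 (nth (0, 0) gens i).2
        (n0 - (nth (0, 0) gens i).1) (a i)).
  exists G; rewrite -HG -E.
  have Dp : D%:F * p0 != 0 :> K by apply: mulf_neq0; [exact: D0'|exact: p00].
  by rewrite mulrCA (mulfK Dp).
apply: ispoly_sumM => i /=.
have [e he] := HD i (ltn_ord i).
have [p hp] : exists p : {poly k}, a i = p%:F.
  by apply: inA_polyE; apply: Ha; exact: ltn_ord.
rewrite hp shiftK_poly mulrA [D%:F * _]mulrC he.
by exists (e * shiftp (nth (0, 0) gens i).1 p); rewrite tofracM.
Qed.

Lemma Q_sumM (Q : int -> K -> Prop) n N (f : 'I_N -> K) c :
  is_grmod alpha (subQ Q) -> (forall i, Q n (c * f i)) -> Q n (c * \sum_i f i).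
Proof.
case=> H0 [HD _] Hf; rewrite mulr_sumr.
apply: (big_ind (Q n)); [exact: H0|exact: HD|by move=> i _; apply: Hf].
Qed.

Lemma Q_all (Q : int -> K -> Prop) :
  is_grmod alpha (subQ Q) -> nonzero (subQ Q) -> forall d, exists q, q != 0 /\ Q d q.
Proof.
move=> HQ [n1 [q1 [Hq1 q10]]] d.
have [a [a0 Ha]] := inA_nz (d - n1).
case: HQ => _ [_ [_ HA]].
have := HA n1 q1 (d - n1) a%:F Hq1 Ha.
rewrite /= subrKC shiftK_poly => H.
exists (q1 * (shiftp n1 a)%:F); split; last exact: H.
apply: mulf_neq0; first by apply/eqP.
by rewrite tofrac_eq0 shiftp_eq0.
Qed.

Lemma C_fin (Q : int -> K -> Prop) :
  is_grmod alpha (subQ Q) -> nonzero (subQ Q) -> forall N (f : nat -> int * K),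
  exists c : K, c != 0 /\ forall i, (i < N)%N -> Q (f i).1 (c * (f i).2).
Proof.
move=> HQ HQnz; elim=> [|N IH] f.
  by exists 1; split; [exact: oner_neq0|].
have [c [c0 Hc]] := IH f.
have [x0|xn0] := eqVneq (c * (f N).2) 0.
  exists c; split; first exact: c0.
  move=> i; rewrite ltnS leq_eqVlt => /orP [/eqP ->|lt]; last exact: Hc.
  rewrite x0; case: HQ => H0 _; exact: H0.
have [q [q0 Hq]] := @Q_all Q HQ HQnz (f N).1.
have [a [b [b0 hb]]] := @ratio q (c * (f N).2) q0.
exists (b%:F * c); split.
  by apply: mulf_neq0; [rewrite tofrac_eq0|exact: c0].
move=> i; rewrite ltnS leq_eqVlt => /orP [/eqP ->|lt].
  rewrite -mulrA mulrC hb mulrC; exact: polyM_closed.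
rewrite -mulrA; apply: polyM_closed => //; exact: Hc.
Qed.

Lemma C_nonzero (P Q : int -> K -> Prop) :
  is_grmod alpha (subQ Q) -> nonzero (subQ Q) -> fingen alpha (subQ P) ->
  exists c, c != 0 /\ Cdef P Q c.
Proof.
move=> HQ HQnz [gens [_ Hdec]].
have [c [c0 Hc]] := @C_fin Q HQ HQnz (size gens) (fun i => nth (0, 0) gens i).
exists c; split; first exact: c0.
move=> n p Hp.
have [a [Ha ->]] := Hdec _ _ Hp.
apply: Q_sumM => // i /=.
have Hi := Hc i (ltn_ord i).
case: HQ => _ [_ [_ HA]].
have := HA _ _ _ _ Hi (Ha i (ltn_ord i)).
by rewrite /= subrKC mulrA.
Qed.
End S.

From Stdlib Require Import Classical.

Lemma ex_min (Pr : nat -> Prop) : (exists n, Pr n) ->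
  exists n, Pr n /\ forall m, (m < n)%N -> ~ Pr m.
Proof.
case=> n Hn.
suff H : forall N n, (n <= N)%N -> Pr n -> exists n, Pr n /\ forall m, (m < n)%N -> ~ Pr m.
  exact: (H n n (leqnn n) Hn).
elim=> [|N IH] {Hn}n le Pn.
  by exists n; split=> // m; rewrite (leqn0 n) in le; rewrite (eqP le).
case: (classic (exists m, (m < n)%N /\ Pr m)) => [[m [lt Pm]]|nex].
  by apply: (IH m) => //; rewrite -ltnS (leq_trans lt le).
by exists n; split=> // m lt Pm; apply: nex; exists m.
Qed.

Theorem proposition3p23 (k : closedFieldType) (hchar : [pchar k] =i pred0)
    (alpha : k) (P Q : int -> Kz k -> Prop) :
  rank_one_sub alpha P -> rank_one_sub alpha Q ->
  (forall phi : int -> Kz k -> Kz k,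
     grhom alpha (subQ P) (subQ Q) phi ->
     exists c : Kz k, forall n p, P n p -> phi n p = c * p) /\
  (exists c0 : Kz k,
     grhom alpha (subQ P) (subQ Q) (fun _ p => c0 * p) /\
     forall phi : int -> Kz k -> Kz k,
       grhom alpha (subQ P) (subQ Q) phi ->
       exists! g : {poly k}, forall n p, P n p -> phi n p = ((g%:F) * c0) * p).
Proof.
move=> [HP [HPnz [HPfg _]]] [HQ [HQnz [HQfg _]]].
have [n0 [p0 [Hp0 p00']]] := HPnz.
have p00 : p0 != 0 by apply/eqP.
have part1 : forall phi : int -> Kz k -> Kz k,
     grhom alpha (subQ P) (subQ Q) phi ->
     exists c : Kz k, forall n p, P n p -> phi n p = c * p.
  move=> phi Hphi; exists (phi n0 p0 / p0) => n p Hp.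
  exact: (@hom_mul _ alpha P Q phi n0 p0 Hphi Hp0 p00 n p Hp).
split; first exact: part1.
have [H [H0 HH]] := @C_bound _ alpha P Q n0 p0 HQfg Hp0 p00.
have [c1 [c10 Hc1]] := @C_nonzero _ alpha P Q HQ HQnz HPfg.
have [g1 Eg1] := HH c1 Hc1.
pose Pr s := exists g : {poly k}, [/\ g != 0, size g = s & Cdef k P Q (g%:F * H)].
have PrE : exists s, Pr s.
  exists (size g1), g1; split; [|by []|by rewrite -Eg1].
  apply/eqP => g10; move: c10; rewrite Eg1 g10 tofrac0 mul0r => /eqP h; exact: (h erefl).
have [s [[g0 [g00 Hs Hg0]] Hmin]] := @ex_min Pr PrE.
have c00 : g0%:F * H != 0 :> Kz k by apply: mulf_neq0; [rewrite tofrac_eq0|exact: H0].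
exists (g0%:F * H); split; first exact: (@grhom_mulC _ alpha P Q _ Hg0).
move=> phi Hphi.
have [c Hc] := part1 phi Hphi.
have Cc : Cdef k P Q c.
  move=> n p Hp; rewrite -(Hc n p Hp); case: Hphi => H1 _; exact: H1.
have [g Eg] := HH c Cc.
set q := divp g g0.
have Cr : Cdef k P Q ((modp g g0)%:F * H).
  have -> : (modp g g0)%:F * H = c + (- q)%:F * (g0%:F * H).
    rewrite Eg [in RHS](divp_eq g g0) tofracD tofracN tofracM -/q.
    rewrite mulrDl mulNr mulrA addrAC subrr add0r //.
  apply: (@C_add _ alpha) => //; exact: (@C_polyM _ alpha).
have r0 : modp g g0 = 0.
  apply/eqP; apply: contraT => rn0; exfalso.
  have lt : (size (modp g g0) < size g0)%N by rewrite ltn_modp.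
  rewrite Hs in lt; apply: (Hmin (size (modp g g0)) lt); rewrite /Pr.
  by exists (modp g g0); split.
have Ec : c = q%:F * (g0%:F * H).
  by rewrite Eg {1}(divp_eq g g0) r0 addr0 tofracM mulrA.
exists q; split.
  by move=> n p Hp; rewrite Hc // Ec.
move=> g' Hg'.
have := Hg' n0 p0 Hp0; rewrite Hc // Ec => /(mulIf p00) /(mulIf c00) /eqP.
by rewrite tofrac_eq => /eqP.
Qed.
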